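(* Let $p$ be an odd prime and let $(P_n)_{n\ge0}$ be the Catalan-Larcombe-French numbers. Then $P_{p-1}\equiv(-1)^{\frac{p-1}{2}}\pmod{p}$ and $16P_{p-2}\equiv(-1)^{\frac{p-1}{2}}\pmod{p}$.
   Context: The Catalan-Larcombe-French numbers are defined by $P_0=1$, $P_1=8$ and, for $n\ge 2$, $n^2P_n-8(3n^2-3n+1)P_{n-1}+128(n-1)^2P_{n-2}=0$. Equivalently, $P_n=\frac{1}{n!}\sum_{r+s=n}\binom{2r}{r}\binom{2s}{s}\frac{(2r)!(2s)!}{r!s!}$ (sum over nonnegative integers $r,s$). *)

(* Defs.v *)
From mathcomp Require Import all_boot all_algebra.
Set Implicit Arguments. Unset Strict Implicit. Unset Printing Implicit Defensive.
Import GRing.Theory Num.Theory.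
Local Open Scope ring_scope.

Definition CLF (n : nat) : rat :=
  (n`!%:R)^-1 * \sum_(r < n.+1)
    (('C(2*r, r) * 'C(2*(n-r), n-r))%:R * ((2*r)`! * (2*(n-r))`!)%:R
       / ((r`! * (n-r)`!)%:R)).

(* Main.v *)
Require Import Defs.
From mathcomp Require Import all_boot all_algebra.
From mathcomp Require Import zify ring lra.
Import GRing.Theory Num.Theory.
Local Open Scope ring_scope.

Definition Zint (x : rat) := exists z : int, x = z%:~R.
Definition pZ (p : nat) (x : rat) := exists z : int, x = p%:R * z%:~R.

Lemma Zint_nat (n : nat) : Zint n%:R.
Proof. by exists n%:Z; rewrite pmulrn. Qed.
Lemma Zint_add x y : Zint x -> Zint y -> Zint (x + y).
Proof. by move=> [a ->] [b ->]; exists (a + b); rewrite intrD. Qed.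
Lemma Zint_sub x y : Zint x -> Zint y -> Zint (x - y).
Proof. by move=> [a ->] [b ->]; exists (a - b); rewrite intrB. Qed.
Lemma Zint_mul x y : Zint x -> Zint y -> Zint (x * y).
Proof. by move=> [a ->] [b ->]; exists (a * b); rewrite intrM. Qed.
Lemma Zint_sign k : Zint ((-1) ^+ k).
Proof. by exists ((-1) ^+ k); rewrite intr_sign. Qed.

Lemma pZ_add p x y : pZ p x -> pZ p y -> pZ p (x + y).
Proof. by move=> [a ->] [b ->]; exists (a + b); rewrite intrD mulrDr. Qed.
Lemma pZ_sub p x y : pZ p x -> pZ p y -> pZ p (x - y).
Proof. by move=> [a ->] [b ->]; exists (a - b); rewrite intrB mulrBr. Qed.
Lemma pZ_0 p : pZ p 0.
Proof. by exists 0; rewrite mulr0. Qed.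
Lemma pZ_mulZ p x y : pZ p x -> Zint y -> pZ p (x * y).
Proof. by move=> [a ->] [b ->]; exists (a * b); rewrite intrM mulrA. Qed.
Lemma pZ_mulZl p x y : Zint y -> pZ p x -> pZ p (y * x).
Proof. by move=> *; rewrite mulrC; apply: pZ_mulZ. Qed.
Lemma pZ_dvd (p a : nat) : (p %| a)%N -> pZ p a%:R.
Proof.
move=> /divnK <-; exists (a %/ p)%N%:Z.
by rewrite natrM mulrC.
Qed.
Lemma pZ_sum p (I : finType) (P : pred I) (F : I -> rat) :
  (forall i, P i -> pZ p (F i)) -> pZ p (\sum_(i | P i) F i).
Proof.
move=> H; apply: (big_ind (pZ p)) => //; [exact: pZ_0 | exact: pZ_add].
Qed.

Lemma fact_neq0 (n : nat) : (n`!%:R : rat) != 0.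
Proof. by rewrite pnatr_eq0 -lt0n fact_gt0. Qed.
Lemma natS_neq0 (n : nat) : (n.+1%:R : rat) != 0.
Proof. by rewrite pnatr_eq0. Qed.

Definition S (m n : nat) : rat :=
  ((2 * m)`!%:R * (2 * n)`!%:R) / (m`!%:R * n`!%:R * (m+n)`!%:R).

Lemma S_sym m n : S m n = S n m.
Proof. by rewrite /S addnC; congr (_ / _); ring. Qed.

Lemma S_recl m n : S m.+1 n = S m n * (2*(2 * m+1))%:R / (m+n+1)%:R.
Proof.
rewrite /S.
have -> : (2 * m.+1 = (2 * m).+2)%N by lia.
have -> : (m.+1 + n = (m+n).+1)%N by lia.
rewrite !factS !natrM.
have h1 := fact_neq0 m; have h2 := fact_neq0 n; have h3 := fact_neq0 (m+n).
have h4 : ((m+n+1)%:R : rat) != 0 by rewrite addn1 natS_neq0.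
have h5 : ((m.+1)%:R : rat) != 0 by apply: natS_neq0.
rewrite -[(m+n).+1]addn1 -[m.+1]addn1 -[(2 * m).+1]addn1 -[(2 * m+1).+1]addn1 in h5 *.
rewrite ?natrD ?natrM in h4 h5 *.
field. by rewrite h1 h2 h3 h4 h5.
Qed.
Lemma S_recr m n : S m n.+1 = S m n * (2 * (2 * n + 1))%:R / (m+n+1)%:R.
Proof. by rewrite S_sym S_recl S_sym (addnC n m). Qed.

Lemma S_rec m n : S m n.+1 = 4 * S m n - S m.+1 n.
Proof.
rewrite S_recr S_recl.
have h4 : ((m+n+1)%:R : rat) != 0 by rewrite addn1 natS_neq0.
rewrite ?natrD ?natrM in h4 *.
field. done.
Qed.

Lemma S_0 m : S m 0 = 'C(2 * m, m)%:R.
Proof.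
rewrite /S -(@bin_fact (2 * m) m); last by lia.
have -> : (2 * m - m = m)%N by lia.
rewrite addn0 muln0 !natrM.
have h1 := fact_neq0 m.
field. by rewrite h1.
Qed.

Lemma S_int n m : Zint (S m n).
Proof.
elim: n m => [|n IH] m; first by rewrite S_0; apply: Zint_nat.
rewrite S_rec; apply: Zint_sub => //; apply: Zint_mul => //.
exact: (Zint_nat 4).
Qed.

Lemma S_diag m : S m m = 'C(2 * m, m)%:R.
Proof.
rewrite /S -(@bin_fact (2 * m) m); last by lia.
have -> : (2 * m - m = m)%N by lia.
have -> : (m + m = 2 * m)%N by lia.
rewrite -(@bin_fact (2 * m) m); last by lia.
have -> : (2 * m - m = m)%N by lia.
rewrite !natrM.
have h1 := fact_neq0 m.
have h2 : ('C(2 * m, m)%:R : rat) != 0 by rewrite pnatr_eq0 -lt0n bin_gt0; lia.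
field. by rewrite h1 h2.
Qed.

Lemma CLF_S n : CLF n = \sum_(r < n.+1)
   ('C(2 * r, r) * 'C(2 * (n - r), n - r))%:R * S r (n - r).
Proof.
rewrite /CLF mulr_sumr; apply: eq_bigr => r _.
have hr : (r + (n - r) = n)%N by have := ltn_ord r; lia.
rewrite /S hr.
have h1 := fact_neq0 r; have h2 := fact_neq0 (n - r); have h3 := fact_neq0 n.
rewrite !natrM.
field. by rewrite h1 h2 h3.
Qed.
Lemma prime_fact_le p n : prime p -> (p %| n`!)%N -> (p <= n)%N.
Proof.
move=> pp; elim: n => [|n IH]; first by rewrite fact0 Euclid_dvd1.
rewrite factS Euclid_dvdM // => /orP [/dvdn_leq -> //| /IH]; lia.
Qed.

Lemma dvd_central p r : prime p -> (p <= 2 * r)%N -> (r < p)%N ->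
  (p %| 'C(2 * r, r))%N.
Proof.
move=> pp h1 h2.
have hf : (p %| (2 * r)`!)%N by apply: dvdn_fact; rewrite (prime_gt0 pp).
rewrite -(@bin_fact (2 * r) r) in hf; last by lia.
move: hf; have -> : (2 * r - r = r)%N by lia.
rewrite !Euclid_dvdM // => /orP [//|] /orP [] /(@prime_fact_le p r pp); lia.
Qed.

Lemma binm1 p k : prime p -> (k < p)%N -> pZ p ('C(p.-1, k)%:R - (-1) ^+ k).
Proof.
move=> pp; elim: k => [|k IH] hk.
  by rewrite bin0 expr0 subrr; apply: pZ_0.
have hp : p = (p.-1).+1 by have := prime_gt0 pp; lia.
have e : 'C(p.-1, k.+1)%:R - (-1) ^+ k.+1 =
   'C(p, k.+1)%:R - ('C(p.-1, k)%:R - (-1) ^+ k) :> rat.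
  by rewrite {2}hp binS natrD exprS; ring.
rewrite e; apply: pZ_sub; last by apply: IH; lia.
by apply: pZ_dvd; apply: prime_dvd_bin.
Qed.
Lemma Zint_opp x : Zint x -> Zint (- x).
Proof. by move=> [a ->]; exists (- a); rewrite mulrNz. Qed.
Lemma pZ_p p y : Zint y -> pZ p (p%:R * y).
Proof. by move=> [z ->]; exists z. Qed.
Ltac zint := repeat lazymatch goal with
  | |- Zint (S _ _) => apply: S_int
  | |- Zint ((-1) ^+ _) => apply: Zint_sign
  | |- Zint (?x ^+ 2) => rewrite (expr2 x)
  | |- Zint (?x ^+ 3) => rewrite (exprS x 2) (expr2 x)
  | |- Zint (_ + _) => apply: Zint_add
  | |- Zint (- _) => apply: Zint_opp
  | |- Zint (_ * _) => apply: Zint_mul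
  | |- Zint (_%:R) => apply: Zint_nat
  | |- Zint 64 => exact: (Zint_nat 64)
  | |- Zint 1 => exact: (Zint_nat 1)
  end.
Lemma sign3 k : ((-1) ^+ k) ^+ 3 = (-1) ^+ k :> rat.
Proof. by rewrite -exprM -signr_odd oddM andbT signr_odd. Qed.

Lemma part1 h : prime (2 * h + 1) ->
  pZ (2 * h + 1) (CLF (2 * h) - (-1) ^+ h).
Proof.
move=> pp; set p := (2 * h + 1)%N.
have hlt : (h < (2 * h).+1)%N by lia.
rewrite CLF_S (bigD1 (Ordinal hlt)) //=.
have -> : (2 * h - h = h)%N by lia.
rewrite S_diag.
set C := ('C(2 * h, h)%:R : rat).
set e := ((-1) ^+ h : rat).
set R := (\sum_(i < _ | _) _).
have hC : pZ p (C - e).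
  have := @binm1 p h pp; rewrite /p addn1 /=; apply; lia.
have eq : ('C(2 * h, h) * 'C(2 * h, h))%:R * C + R - e =
   (C - e) * (C ^+ 2 + C * e + e ^+ 2) + (e ^+ 3 - e) + R.
  by rewrite natrM -/C; ring.
rewrite eq /e sign3 subrr addr0 -/e.
apply: pZ_add.
  apply: pZ_mulZ => //.
  apply: Zint_add; first apply: Zint_add.
  - by apply: Zint_mul; apply: Zint_nat.
  - by apply: Zint_mul; [apply: Zint_nat| apply: Zint_sign].
  - by apply: Zint_mul; apply: Zint_sign.
apply: pZ_sum => i hi.
apply: pZ_mulZ; last exact: S_int.
apply: pZ_dvd.
have hi' : (i : nat) != h by move: hi; apply: contra => /eqP hh; apply/eqP/val_inj.
have := ltn_ord i => ilt.
have [hh|hh] := ltnP h i.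
  by apply: dvdn_mulr; apply: dvd_central => //; rewrite /p; lia.
apply: dvdn_mull; apply: dvd_central => //; rewrite /p; lia.
Qed.
Lemma key_alg (K c e : rat) : 0 <= K ->
  ((K + 1) * (2 * K + 1)) ^+ 2 * (64 * c ^+ 2 * (2 * c * (2 * (2 * K + 1)) / (2 * K + 2)) - e) =
  ((2 * c * (2 * (2 * K + 1)) / (2 * K + 2)) ^+ 3 - e) + (2 * K + 3) *
   ((2 * K + 1) * ((2 * K + 2) ^+ 2 + 1) * (2 * c * (2 * (2 * K + 1)) / (2 * K + 2)) ^+ 3
    - K * ((K + 1) * (2 * K + 1) + 1) * e).
Proof.
move=> hK. have h : 2 * K + 2 != 0 by apply/eqP; lra.
field. done.
Qed.
Lemma t (k : nat) : ((k.+1 * (2 * k + 1))%N%:R : rat) = (k%:R + 1) * (2 * k%:R + 1).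
Proof. rewrite natrM natrD natrM; congr (_ * _). by rewrite -addn1 natrD. Qed.
Lemma c4 k : (k.+1 + k + 1)%:R = 2 * k%:R + 2 :> rat.
Proof. rewrite !natrD -addn1 natrD; ring. Qed.
Lemma c3 k : (2 * (2 * k + 1))%:R = 2 * (2 * k%:R + 1) :> rat.
Proof. rewrite !natrM !natrD ?natrM. ring. Qed.
Lemma c2 k : (((2 * k + 1) * ((2 * k + 2) ^ 2 + 1))%N%:R : rat) = (2 * k%:R + 1) * ((2 * k%:R + 2) ^+ 2 + 1).
Proof. rewrite !natrM !natrD natrX !natrD ?natrM. ring. Qed.
Lemma c5 k : ((2 * k + 3)%N%:R : rat) = 2 * k%:R + 3.
Proof. by rewrite natrD natrM. Qed.
Lemma hu_alg (K X : rat) :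
  X = ((K + 1) * (2 * K + 1)) ^+ 2 * X - (2 * K + 3) * (K * ((K + 1) * (2 * K + 1) + 1) * X).
Proof. ring. Qed.
Lemma cube_alg (C e : rat) : C ^+ 3 - e = (C - e) * (C ^+ 2 + C * e + e ^+ 2) + (e ^+ 3 - e).
Proof. ring. Qed.
Lemma eq_alg (a b c C e R : rat) : b = C ->
  16 * (a * b * (2 * c) + (b * a * (2 * c) + R)) - e = (64 * c ^+ 2 * C - e) + 16 * R
  + 64 * c * C * (a - c).
Proof. move=> ->; ring. Qed.
Lemma part2 k : prime (2 * k + 3) ->
  pZ (2 * k + 3) (16 * CLF (2 * k + 1) - (-1) ^+ k.+1).
Proof.
move=> pp; set p := (2 * k + 3)%N.
have hlt1 : (k < (2 * k + 1).+1)%N by lia.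
have hlt2 : (k.+1 < (2 * k + 1).+1)%N by lia.
rewrite CLF_S (bigD1 (Ordinal hlt1)) //= (bigD1 (Ordinal hlt2)) //=.
have -> : (2 * k + 1 - k = k.+1)%N by lia.
have -> : (2 * k + 1 - k.+1 = k)%N by lia.
have e1 : S k k.+1 = 2 * S k k.
  rewrite S_recr.
  have h4 : ((k+k+1)%:R : rat) != 0 by rewrite addn1 natS_neq0.
  rewrite ?natrD ?natrM in h4 *. field. done.
have e2 : S k.+1 k = 2 * S k k by rewrite S_sym e1.
have e3 : S k.+1 k.+1 = 2 * S k k * (2 * (2 * k + 1))%:R / (k.+1 + k + 1)%:R.
  by rewrite S_recr e2.
rewrite e1 e2.
set R := (\sum_(i < _ | _) _).
set c := S k k.
set C := S k.+1 k.+1.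
set e := ((-1) ^+ k.+1 : rat).
have hC : pZ p (C - e).
  have := @binm1 p k.+1 pp; rewrite /C S_diag /p.
  have -> : (2 * k + 3).-1 = (2 * k.+1)%N by lia.
  apply; lia.
set X := 64 * c ^+ 2 * C - e.
set u := ((k.+1 * (2 * k + 1))%N%:R : rat).
set a := (((2 * k + 1) * ((2 * k + 2) ^ 2 + 1))%N%:R : rat).
have hk : ((k.+1)%:R : rat) != 0 by apply: natS_neq0.
have key : u ^+ 2 * X = (C ^+ 3 - e) + p%:R * (a * C ^+ 3 - k%:R * (u + 1) * e).
  rewrite /X /C e3 /u /a t c2 c3 c4 /p c5 -/c.
  apply: key_alg; exact: ler0n.
have hu : X = u ^+ 2 * X - p%:R * (k%:R * (u + 1) * X).
  rewrite /u t /p c5; exact: hu_alg.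
have hX : pZ p X.
  rewrite hu; apply: pZ_sub.
    rewrite key; apply: pZ_add.
      rewrite cube_alg /e sign3 subrr addr0 -/e.
      apply: pZ_mulZ => //.
      by rewrite /C /e; zint.
    by apply: pZ_p; rewrite /a /C /u /e; zint.
  by apply: pZ_p; rewrite /X /u /c /C /e; zint.
rewrite !natrM (eq_alg _ _ c C e R (esym (S_diag k.+1))) -/X.
rewrite /c S_diag subrr mulr0 addr0.
apply: pZ_add => //.
apply: pZ_mulZl; first exact: (Zint_nat 16).
apply: pZ_sum => i /andP [hi1 hi2].
apply: pZ_mulZ; last exact: S_int.
apply: pZ_dvd.
have hi1' : (i : nat) != k.+1 by apply: contraNneq hi2 => hh; apply/eqP; apply: val_inj; rewrite /= hh.
have hi2' : (i : nat) != k by apply: contraNneq hi1 => hh; apply/eqP; apply: val_inj; rewrite /= hh.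
have := ltn_ord i => ilt.
have [hh|hh] := ltnP k.+1 i.
  by apply: dvdn_mulr; apply: dvd_central => //; rewrite /p; lia.
apply: dvdn_mull; apply: dvd_central => //; rewrite /p; lia.
by apply/eqP => H; have /= := congr1 val H; lia.
Qed.
Theorem lemma4 (p : nat) (hp : prime p) (hodd : odd p) :
  (exists k : int, CLF (p.-1) - (-1) ^+ (p.-1)./2 = p%:R * k%:~R) /\
  (exists k : int, 16 * CLF (p.-2) - (-1) ^+ (p.-1)./2 = p%:R * k%:~R).
Proof.
have hp2 := odd_double_half p; rewrite hodd in hp2.
set h := p./2 in hp2.
have ep : p = (2 * h + 1)%N by lia.
have eh : (p.-1)./2 = h by rewrite ep addn1 /= mul2n doubleK.
rewrite eh.
split.
  have -> : p.-1 = (2 * h)%N by lia.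
  rewrite ep; apply: part1; rewrite -ep //.
have h0 : h <> 0%N by move=> h0; rewrite ep h0 in hp.
have [k ek] : exists k, h = k.+1 by exists h.-1; lia.
have -> : p.-2 = (2 * k + 1)%N by lia.
rewrite ep ek.
have -> : (2 * k.+1 + 1 = 2 * k + 3)%N by lia.
apply: part2.
have <- : p = (2 * k + 3)%N by lia.
done.
Qed.
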